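(* Let $c$ be a cost function, $\alpha_i>0$, $m_i$ measures on $\mathbb{R}^n$, and let $(\Phi_1,\dots,\Phi_N)$ be an admissible tuple maximizing $\mathcal{BS}_{\alpha,m}$ over all admissible tuples, with $0<\int e^{-\alpha_i\Phi_i}dm_i<\infty$. Let $\mu_i=e^{-\alpha_i\Phi_i}m_i/\int e^{-\alpha_i\Phi_i}dm_i$ and $d(x)=\sum_{i=1}^N\Phi_i(x_i)-c(x)\ge0$. Let $\nu_1,\dots,\nu_N$ be probability measures on $\mathbb{R}^n$ such that the minimization transportation problem for the cost $d$ with marginals $\nu_i$ and its dual problem both admit solutions and their optimal values coincide. Then $$K^{\min}_d(\nu_1,\dots,\nu_N)\le\sum_{i=1}^N\frac{1}{\alpha_i}\,\mathrm{Ent}_{\mu_i}(\nu_i).$$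
   Context: Points of $(\mathbb{R}^n)^N$ are written $x=(x_1,\dots,x_N)$. A tuple $(V_i)$ of functions $V_i:\mathbb{R}^n\to(-\infty,+\infty]$ is admissible (for $c$) if $\sum_iV_i(x_i)\ge c(x)$ for all $x$; $\mathcal{BS}_{\alpha,m}(V_1,\dots,V_N)=\prod_i(\int e^{-\alpha_iV_i}dm_i)^{1/\alpha_i}$. $K^{\min}_d(\nu_1,\dots,\nu_N)=\inf_\pi\int d\,d\pi$ over probability measures $\pi$ on $(\mathbb{R}^n)^N$ with marginals $\nu_1,\dots,\nu_N$; its dual problem is to maximize $\sum_i\int f_i\,d\nu_i$ over tuples $f_i\in L^1(\nu_i)$ with $\sum_if_i(x_i)\le d(x)$ for all $x$. $\mathrm{Ent}_\mu(\nu)=\int\rho\log\rho\,d\mu$ if $\nu=\rho\mu$, and $+\infty$ if $\nu$ is not absolutely continuous w.r.t. $\mu$. *)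

(* Defs.v *)
From HB Require Import structures.
From mathcomp Require Import all_boot all_order all_algebra.
From mathcomp Require Import all_classical all_reals all_analysis.
From mathcomp Require Import measurable_realfun.

Set Implicit Arguments.
Unset Strict Implicit.
Unset Printing Implicit Defensive.

Import Order.TTheory GRing.Theory Num.Theory.
Local Open Scope classical_set_scope.
Local Open Scope ring_scope.

(* R^n is modelled as n.-tuple R with the product (Borel) sigma-algebra
   generated by the coordinate projections; (R^n)^N as N.-tuple (n.-tuple R). *)
Notation Rn R n := (n.-tuple R).
Notation RnN R n N := (N.-tuple (n.-tuple R)).

Section defs.
Context {R : realType} (n N : nat).
Local Open Scope ereal_scope.

Definition coord (i : 'I_N) (x : RnN R n N) : Rn R n := tnth x i.

Definition admissible (c : RnN R n N -> R) (V : 'I_N -> Rn R n -> \bar R) :=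
  (forall i, measurable_fun [set: Rn R n] (V i)) /\
  (forall i x, V i x != -oo) /\
  (forall x : RnN R n N, (c x)%:E <= \sum_(i < N) V i (coord i x)).

Definition expm (a : R) (V : Rn R n -> \bar R) (y : Rn R n) : \bar R :=
  expeR (- (a%:E * V y)).

Definition BS (alpha : 'I_N -> R)
    (m : 'I_N -> {measure set (Rn R n) -> \bar R})
    (V : 'I_N -> Rn R n -> \bar R) : \bar R :=
  \prod_(i < N) ((\int[m i]_y expm (alpha i) (V i) y) `^ ((alpha i)^-1)%R).

Definition is_coupling (nu : 'I_N -> probability (Rn R n) R)
    (pi : probability (RnN R n N) R) :=
  forall i (A : set (Rn R n)), measurable A ->
    pi (coord i @^-1` A) = nu i A.

Definition Kmin (d : RnN R n N -> \bar R) (nu : 'I_N -> probability (Rn R n) R) :=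
  ereal_inf [set \int[pi]_x d x | pi in [set pi | is_coupling nu pi]].

Definition dual_admissible (d : RnN R n N -> \bar R)
    (nu : 'I_N -> probability (Rn R n) R) (f : 'I_N -> Rn R n -> R) :=
  (forall i, (nu i).-integrable [set: Rn R n] (fun y => (f i y)%:E)) /\
  (forall x : RnN R n N, (\sum_(i < N) f i (coord i x))%:E <= d x).

Definition dual_value (nu : 'I_N -> probability (Rn R n) R)
    (f : 'I_N -> Rn R n -> R) : \bar R :=
  \sum_(i < N) \int[nu i]_y (f i y)%:E.

Definition Kdual (d : RnN R n N -> \bar R) (nu : 'I_N -> probability (Rn R n) R) :=
  ereal_sup [set dual_value nu f | f in [set f | dual_admissible d nu f]].

Definition dcost (c : RnN R n N -> R) (Phi : 'I_N -> Rn R n -> \bar R)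
    (x : RnN R n N) : \bar R :=
  \sum_(i < N) Phi i (coord i x) - (c x)%:E.

End defs.

Section entropy.
Context {d : measure_display} {T : measurableType d} {R : realType}.
Local Open Scope ereal_scope.

Definition is_density (mu nu : {measure set T -> \bar R}) (rho : T -> R) :=
  measurable_fun [set: T] rho /\ (forall x, (0 <= rho x)%R) /\
  forall A, measurable A -> nu A = \int[mu]_(x in A) (rho x)%:E.

(* Ent_mu(nu) = int rho log rho dmu if nu = rho mu, +oo if nu is not
   absolutely continuous w.r.t. mu.  All densities agree mu-a.e., so the
   infimum below is the common value; the infimum of the empty set is +oo. *)
Definition Ent (mu nu : {measure set T -> \bar R}) : \bar R :=
  ereal_inf [set \int[mu]_x (rho x * ln (rho x))%:E
            | rho in [set rho | is_density mu nu rho]].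

End entropy.

(* Main.v *)
Require Import Defs.
Set Warnings "-all".
From HB Require Import structures.
From mathcomp Require Import all_boot all_order all_algebra.
From mathcomp Require Import all_classical all_reals all_analysis.
From mathcomp Require Import measurable_realfun.
From mathcomp Require Import ring lra.
Import Order.TTheory GRing.Theory Num.Theory.
Local Open Scope classical_set_scope.
Local Open Scope ring_scope.

Section dens.
Context d (T : measurableType d) (R : realType).
Variables (mu nu : {measure set T -> \bar R}) (g : T -> \bar R).
Hypothesis g0 : forall x, (0 <= g x)%E.
Hypothesis gfin : forall x, g x \is a fin_num.
Hypothesis mg : measurable_fun setT g.
Hypothesis nug : forall A, measurable A -> nu A = (\int[mu]_(x in A) g x)%E.
Local Open Scope ereal_scope.
Import HBNNSimple.

Lemma dens_ge0 f E : (forall x, 0 <= f x) ->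
    measurable E -> measurable_fun E f ->
  \int[mu]_(x in E) (f x * g x) = \int[nu]_(x in E) f x.
Proof.
move=> f0 mE mf.
pose h := nnsfun_approx mE mf.
have -> : \int[nu]_(x in E) f x =
    lim (\int[nu]_(x in E) (EFin \o h n) x @[n --> \oo]).
  have fE x : E x -> f x = lim ((EFin \o h n) x @[n --> \oo]).
    by move=> Ex; apply/esym/cvg_lim => //; exact: cvg_nnsfun_approx.
  under eq_integral => x /[!inE] /fE -> //.
  apply: monotone_convergence => //.
  - move=> n; apply/measurable_EFinP.
    by apply: (measurable_funS measurableT) => //; exact/measurable_funP.
  - by move=> n x Ex //=; rewrite lee_fin.
  - by move=> x Ex a b ab; rewrite lee_fin; exact/lefP/nd_nnsfun_approx.
have -> : \int[mu]_(x in E) (f \* g) x =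
    lim (\int[mu]_(x in E) ((EFin \o h n) \* g) x @[n --> \oo]).
  have fg x : E x -> f x * g x = lim (((EFin \o h n) \* g) x @[n --> \oo]).
    by move=> Ex; apply/esym/cvg_lim => //; apply: cvgeZr;
      [exact: gfin|exact: cvg_nnsfun_approx].
  under eq_integral => x /[!inE] /fg -> //.
  apply: monotone_convergence => [//| | |].
  - move=> n; apply/emeasurable_funM; apply/measurable_funTS.
      exact/measurable_EFinP.
    exact: mg.
  - by move=> n x Ex /=; rewrite mule_ge0 ?lee_fin ?g0.
  - by move=> x Ex a b ab/=; rewrite lee_wpmul2r ?lee_fin ?g0//; exact/lefP/nd_nnsfun_approx.
suff suf n : \int[mu]_(x in E) ((EFin \o h n) x * g x) =
    \int[nu]_(x in E) (EFin \o h n) x.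
  by under eq_fun do rewrite suf.
transitivity (\int[nu]_(x in E)
   (\sum_(y \in range (h n)) (y * \1_(h n @^-1` [set y]) x)%:E)); last first.
  by apply: eq_integral => t tE; rewrite /= fimfunE -fsumEFin.
have indich m r : measurable_fun E (fun x => (r * \1_(h m @^-1` [set r]) x)%:E).
  by apply: (measurable_comp measurableT) => //; exact: measurable_funM.
rewrite ge0_integral_fsum//; last by move=> m y Ey; exact: nnfun_muleindic_ge0.
transitivity (\int[mu]_(x in E) (\sum_(y \in range (h n))
    (y * \1_(h n @^-1` [set y]) x)%:E * g x)).
  under [RHS]eq_integral => x xE.
    rewrite -ge0_mule_fsuml => [|y]; last exact: nnfun_muleindic_ge0.
    rewrite fsumEFin // -(fimfunE _ x); over.
  by [].
rewrite ge0_integral_fsum//; last 2 first.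
  - move=> y; apply: emeasurable_funM => //; apply: measurable_funTS.
    exact: mg.
  - by move=> m y Ey; rewrite mule_ge0 ?g0// nnfun_muleindic_ge0.
apply: eq_fsbigr => r rhn.
under [RHS]eq_integral do rewrite EFinM.
rewrite integralZl_indic_nnsfun => //.
under eq_integral do rewrite EFinM -muleA.
rewrite ge0_integralZl//.
- under eq_integral do rewrite muleC.
  rewrite (eq_integral (g \_ (h n @^-1` [set r]))); last first.
    by move=> x xE; rewrite epatch_indic.
  by rewrite -integral_mkcondr -nug// integral_indic// setIC.
- apply: emeasurable_funM; first exact/measurable_EFinP.
  exact/measurable_funTS/mg.
- by move=> t Et; rewrite mule_ge0 ?lee_fin ?g0.
- by move: rhn; rewrite inE => -[t _ <-]; rewrite lee_fin.
Qed.

Lemma dens_int (f : T -> R) : nu.-integrable setT (EFin \o f) ->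
  mu.-integrable setT (fun x => (f x)%:E * g x) /\
  \int[mu]_x ((f x)%:E * g x) = \int[nu]_x (f x)%:E.
Proof.
move=> fi; have mf : measurable_fun setT (EFin \o f) by case/integrableP: fi.
have mfg : measurable_fun setT (fun x => (f x)%:E * g x).
  exact: emeasurable_funM.
split.
  apply/integrableP; split => //.
  under eq_integral do rewrite abseM (gee0_abs (g0 _)).
  rewrite (@dens_ge0 (fun x => `|(f x)%:E|) setT)//.
  - by case/integrableP: fi.
  - exact: measurableT_comp.
have Hp : forall x, ((fun x => (f x)%:E * g x)^\+ x = ((EFin \o f)^\+ x) * g x).
  move=> x; rewrite !funeposE /=; have [f0|f0] := leP 0%R (f x).
    rewrite !max_l ?lee_fin// mule_ge0 ?lee_fin//.
  rewrite !max_r ?lee_fin ?mul0e ?(ltW f0)//.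
  by rewrite mule_le0_ge0 ?lee_fin ?(ltW f0).
have Hn : forall x, ((fun x => (f x)%:E * g x)^\- x = ((EFin \o f)^\- x) * g x).
  move=> x; rewrite !funenegE /=; have [f0|f0] := leP 0%R (f x).
    rewrite !max_r ?mul0e// ?lee_fin ?oppr_le0//.
    by rewrite oppe_le0 mule_ge0 ?lee_fin.
  rewrite !max_l ?lee_fin ?oppr_ge0 ?(ltW f0)//; first by rewrite EFinN mulNe.
  by rewrite -mulNe mule_ge0 ?lee_fin ?oppr_ge0 ?(ltW f0).
rewrite integralE [RHS]integralE.
under eq_integral do rewrite Hp.
under [X in _ - X = _]eq_integral do rewrite Hn.
rewrite dens_ge0//; last exact: measurable_funepos.
by rewrite dens_ge0//; exact: measurable_funeneg.
Qed.
End dens.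

Lemma le_int_gen d (T : measurableType d) (R : realType) (mu : {measure set T -> \bar R})
  D (f g : T -> \bar R) : measurable D -> measurable_fun D f -> measurable_fun D g ->
  {in D, forall x, (f x <= g x)%E} -> (\int[mu]_(x in D) f x <= \int[mu]_(x in D) g x)%E.
Proof.
move=> mD mf mg fg; rewrite integralE [leRHS]integralE leeB//.
- apply: ge0_le_integral => //.
  + exact: measurable_funepos.
  + exact: measurable_funepos.
  + by move=> x /mem_set; exact: funepos_le.
- apply: ge0_le_integral => //.
  + exact: measurable_funeneg.
  + exact: measurable_funeneg.
  + by move=> x /mem_set; exact: funeneg_le.
Qed.

Lemma young (R : realType) (x y : R) : 0 <= x -> x * y <= x * ln x - x + expR y.
Proof.
move=> x0; have [->|xp] := eqVneq x 0.
  by rewrite ln0// !mul0r subrr add0r expR_ge0.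
have xp' : 0 < x by rewrite lt_def xp x0.
have e : expR y = x * expR (y - ln x).
  by rewrite expRD expRN lnK ?posrE// mulrCA divff// mulr1.
have := expR_ge1Dx (y - ln x) => h.
have : x * (1 + (y - ln x)) <= x * expR (y - ln x) by rewrite ler_pM2l.
rewrite -e => h2; nra.
Qed.

Lemma int_pos d (T : measurableType d) (R : realType) (mu : probability T R)
  (h : T -> R) : measurable_fun setT h -> (forall x, 0 < h x) ->
  (0 < \int[mu]_x (h x)%:E)%E.
Proof.
move=> mh hp; rewrite lt_neqAle integral_ge0 ?andbT; last by move=> x _; rewrite lee_fin ltW.
apply/negP => /eqP H0.
have mh' : measurable_fun setT (EFin \o h) by exact/measurable_EFinP.
pose A k := setT `&` [set x | ((k.+1%:R)^-1%:E <= `|(h x)%:E|)%E].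
have mA k : measurable (A k) by apply: emeasurable_fun_c_infty => //; exact: measurableT_comp.
have A0 k : mu (A k) = 0%E.
  have := le_integral_abse mu measurableT mh' (a := (k.+1%:R)^-1) _.
  rewrite invr_gt0 ltr0n => /(_ isT).
  have -> : (\int[mu]_x `|(EFin \o h) x| = 0)%E.
    by rewrite [RHS]H0; apply: eq_integral => x _; rewrite /= gtr0_norm.
  move=> H; apply/eqP; rewrite eq_le measure_ge0 andbT.
  by rewrite -(@lee_pmul2l _ ((k.+1%:R)^-1)%:E) ?lte_fin ?invr_gt0 ?ltr0n// mule0.
have : mu.-negligible (\bigcup_k A k).
  by apply: negligible_bigcup => k; exists (A k); split => //=; exact: A0.
case=> M [mM M0 sub].
have : (mu setT <= mu M)%E.
  apply: le_measure; rewrite ?inE//.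
  move=> x _; apply: sub; exists (Num.trunc ((h x)^-1)) => //.
  split => //=; rewrite gtr0_norm//.
  rewrite lee_fin ltW// -invf_plt ?posrE// ?ltr0n// truncnS_gt//.
by rewrite M0 probability_setT lee_fin ler10.
Qed.

Lemma gibbs d (T : measurableType d) (R : realType) (mu nu : probability T R)
  (f : T -> R) (a : R) : 0 < a -> nu.-integrable setT (EFin \o f) ->
  measurable_fun setT f ->
  (\int[mu]_x (expR (a * f x))%:E < +oo)%E ->
  ((a * fine (\int[nu]_x (f x)%:E) - ln (fine (\int[mu]_x (expR (a * f x))%:E)))%:E
     <= Ent mu nu)%E.
Proof.
move=> a0 fi mf Foo.
set F := (\int[mu]_x (expR (a * f x))%:E)%E.
have mef : measurable_fun setT (fun x => expR (a * f x)).
  apply: measurableT_comp => //; exact: measurable_funM.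
have F0 : (0 < F)%E by apply: int_pos => // x; exact: expR_gt0.
have Ffin : F \is a fin_num by rewrite ge0_fin_numE ?ltW.
set Fr := fine F; have FE : F = Fr%:E by rewrite fineK.
have Fr0 : 0 < Fr by rewrite -lte_fin -FE.
set L := ln Fr.
have Ifin : (\int[nu]_x (f x)%:E)%E \is a fin_num.
  by rewrite -integral_fin_num_abs//; case/integrableP: fi.
set I := fine (\int[nu]_x (f x)%:E)%E.
have IE : (\int[nu]_x (f x)%:E)%E = I%:E by rewrite fineK.
apply/ereal_infP => _ [rho [mr [r0 hr]] <-].
have dint := @dens_int _ T R mu nu (EFin \o rho) (fun x => r0 x) (fun x => isT)
  (proj2 (measurable_EFinP _ _) mr) hr f fi.
case: dint => fri frE.
have rho1 : (\int[mu]_x (rho x)%:E = 1)%E.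
  by rewrite -(probability_setT nu) hr.
have rhoi : mu.-integrable setT (EFin \o rho).
  apply/integrableP; split; first exact/measurable_EFinP.
  under eq_integral do rewrite /= ger0_norm//.
  by rewrite rho1 ltry.
have ei : mu.-integrable setT (EFin \o (fun x => expR (a * f x))).
  apply/integrableP; split; first exact/measurable_EFinP.
  under eq_integral do rewrite /= ger0_norm ?expR_ge0//.
  by [].
pose h x := a * (f x * rho x) + (1 - L) * rho x - expR (- L) * expR (a * f x).
have hE : (\int[mu]_x (h x)%:E = (a * I - L)%:E)%E.
  transitivity (\int[mu]_x (a%:E * ((f x)%:E * (rho x)%:E) + (1-L)%:E * (rho x)%:E
     - (expR (- L))%:E * (expR (a * f x))%:E))%E.
    by apply: eq_integral => x _; rewrite /h EFinB EFinD !EFinM.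
  rewrite integralB//; last exact: integrableZl.
    rewrite integralD//; try exact: integrableZl.
    rewrite !integralZl// frE IE rho1 -/F FE mule1. rewrite -!EFinM -EFinD. congr EFin.
    rewrite expRN lnK ?posrE// mulVf ?gt_eqF//; lra.
  by apply: integrableD => //; exact: integrableZl.
rewrite -hE; apply: le_int_gen => //.
- apply/measurable_EFinP; apply: measurable_funB; first apply: measurable_funD.
  + apply: measurable_funM => //; exact: measurable_funM.
  + exact: measurable_funM.
  + exact: measurable_funM.
- apply/measurable_EFinP; apply: measurable_funM => //.
  exact: measurableT_comp.
move=> x _; rewrite lee_fin /h.
have := @young R _ (a * f x - L) (r0 x).
rewrite expRD mulrC => H.
nra.
Qed.

Lemma measurable_expeR (R : realType) : measurable_fun [set: \bar R] (@expeR R).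
Proof.
have -> : @expeR R = fun x => if x \is a fin_num then (expR (fine x))%:E
    else (if x == +oo%E then +oo%E else 0%E).
  by apply/funext => -[r| |].
apply: measurable_fun_ifT.
- apply: (measurable_fun_bool true); rewrite setTI.
  have := @emeasurable_fin_num _ _ R setT id measurableT (@measurable_id _ _ setT).
  by rewrite ?setTI.
- apply/measurable_EFinP.
  apply: measurableT_comp => //.
- apply: measurable_fun_ifT => //.
  apply: (measurable_fun_bool true); rewrite setTI.
  have -> : (fun x : \bar R => x == +oo%E) @^-1` [set true] = [set +oo%E].
    by apply/seteqP; split => x /= /eqP.
  exact: emeasurable_set1.
Qed.

Lemma measurable_expm d (T : measurableType d) (R : realType) (a : R) (V : T -> \bar R) :
  measurable_fun setT V -> measurable_fun setT (fun y => expeR (- (a%:E * V y)))%E.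
Proof.
move=> mV; apply: measurableT_comp; first exact: measurable_expeR.
apply: measurableT_comp; first exact: oppe_measurable.
by apply: emeasurable_funM => //; exact: measurable_cst.
Qed.

Lemma expm_fin (R : realType) (a : R) (x : \bar R) : 0 < a -> x != -oo%E ->
  expeR (- (a%:E * x))%E \is a fin_num.
Proof.
move=> a0; case: x => [r| |] //= _.
by rewrite mulry gtr0_sg// mul1e.
Qed.

Lemma expmV (R : realType) (a t : R) (x : \bar R) : 0 < a -> x != -oo%E ->
  expeR (- (a%:E * (x - t%:E)))%E = ((expR (a * t))%:E * expeR (- (a%:E * x)))%E.
Proof.
move=> a0; case: x => [r| |] //= _.
  by rewrite -EFinM -expRD; congr (EFin (expR _)); lra.
by rewrite mulry gtr0_sg// mul1e mule0.
Qed.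

Lemma poweR_gt0' (R : realType) (x : \bar R) (r : R) : (0 < x)%E -> (0 < x `^ r)%E.
Proof.
case: x => [s| |] //=.
- by rewrite !lte_fin => s0; exact: powR_gt0.
- by case: ifP.
Qed.

Theorem theorem2p3 (R : realType) (n N : nat)
  (c : RnN R n N -> R) (hc : measurable_fun [set: RnN R n N] c)
  (alpha : 'I_N -> R) (halpha : forall i, 0 < alpha i)
  (m : 'I_N -> {measure set (Rn R n) -> \bar R})
  (Phi : 'I_N -> Rn R n -> \bar R)
  (hPhi : admissible c Phi)
  (hmax : forall V, admissible c V -> (BS alpha m V <= BS alpha m Phi)%E)
  (hZ : forall i, (0 < \int[m i]_y expm (alpha i) (Phi i) y < +oo)%E)
  (mu : 'I_N -> probability (Rn R n) R)
  (hmu : forall i (A : set (Rn R n)), measurable A ->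
     mu i A = (((fine (\int[m i]_y expm (alpha i) (Phi i) y))^-1)%:E
              * \int[m i]_(y in A) expm (alpha i) (Phi i) y)%E)
  (nu : 'I_N -> probability (Rn R n) R)
  (hprimal : exists pi : probability (RnN R n N) R,
     is_coupling nu pi /\
     (\int[pi]_x dcost c Phi x)%E = Kmin (dcost c Phi) nu)
  (hdual : exists f : 'I_N -> Rn R n -> R,
     dual_admissible (dcost c Phi) nu f /\
     dual_value nu f = Kdual (dcost c Phi) nu)
  (hval : Kmin (dcost c Phi) nu = Kdual (dcost c Phi) nu) :
  (Kmin (dcost c Phi) nu
     <= \sum_(i < N) ((alpha i)^-1)%:E * Ent (mu i) (nu i))%E.
Proof.
case: hdual => f [[fi hf] hfv].
rewrite hval -hfv /dual_value.
case: hPhi => mPhi [Phiny hPc].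
have mf i : measurable_fun setT (f i).
  by apply/measurable_EFinP; case/integrableP: (fi i).
pose Z i := (\int[m i]_y expm (alpha i) (Phi i) y)%E.
have Zfin i : Z i \is a fin_num.
  by case/andP: (hZ i) => Z0 Zoo; rewrite ge0_fin_numE// ltW.
pose z i := fine (Z i).
have ZE i : Z i = (z i)%:E by rewrite fineK.
have z0 i : 0 < z i by rewrite -lte_fin -ZE; case/andP: (hZ i).
have mexpm i : measurable_fun setT (expm (alpha i) (Phi i)).
  exact: measurable_expm.
pose g i y := (((z i)^-1)%:E * expm (alpha i) (Phi i) y)%E.
have g0 i y : (0 <= g i y)%E.
  by rewrite mule_ge0 ?lee_fin ?invr_ge0 ?(ltW (z0 i)) // /expm expeR_ge0.
have gfin i y : g i y \is a fin_num.
  by rewrite fin_numM// expm_fin.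
have mg i : measurable_fun setT (g i).
  by apply: emeasurable_funM => //; exact: measurable_cst.
have hmu' i A : measurable A -> mu i A = (\int[m i]_(y in A) g i y)%E.
  move=> mA; rewrite hmu// ge0_integralZl//.
  - exact: measurable_funS (mexpm i).
  - by move=> y _; exact: expeR_ge0.
  - by rewrite lee_fin invr_ge0 ltW.
pose F i := (\int[mu i]_x (expR (alpha i * f i x))%:E)%E.
pose V i y := (Phi i y - (f i y)%:E)%E.
have mef i : measurable_fun setT (fun x => expR (alpha i * f i x)).
  apply: (measurableT_comp (@measurable_expR R)).
  exact: measurable_funM.
have WE i : (\int[m i]_y expm (alpha i) (V i) y = (z i)%:E * F i)%E.
  rewrite /F -(@dens_ge0 _ _ R (m i) (mu i) (g i) (g0 i) (gfin i) (mg i) (hmu' i)); last first.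
  - exact/measurable_EFinP.
  - by [].
  - by move=> x; rewrite lee_fin expR_ge0.
  transitivity (\int[m i]_x (((z i)^-1)%:E * expm (alpha i) (V i) x) * (z i)%:E)%E.
    rewrite ge0_integralZl//.
    + by rewrite muleAC -EFinM mulVf ?gt_eqF// mul1e.
    + by apply: measurable_expm; apply: emeasurable_funB => //; exact/measurable_EFinP.
    + by move=> y _; exact: expeR_ge0.
    + by rewrite lee_fin invr_ge0 ltW.
  rewrite muleC; congr (_ * _)%E; apply: eq_integral => x _.
  by rewrite /expm /V expmV// muleCA.
have F0 i : (0 < F i)%E by apply: int_pos => // x; exact: expR_gt0.
have admV : admissible c V.
  split; [|split].
  - move=> i; apply: emeasurable_funB => //; exact/measurable_EFinP.
  - by move=> i x; move: (Phiny i x); rewrite /V; case: (Phi i x).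
  - move=> x; have := hf x; rewrite /dcost /V.
    rewrite big_split /= sumEFin sumrN !EFinN.
    by rewrite !leeBrDl// addeC.
have Hm := hmax V admV; rewrite /BS in Hm.
have ZE' i : (\int[m i]_y expm (alpha i) (Phi i) y = (z i)%:E)%E := ZE i.
move: Hm; under eq_bigr do rewrite WE.
under [X in (_ <= X)%E -> _]eq_bigr do rewrite ZE' poweR_EFin.
rewrite prodEFin => Hm.
have Ffin i : (F i < +oo)%E.
  rewrite ltNge leye_eq; apply/negP => /eqP Fi.
  move: Hm; rewrite (bigD1 i) //= Fi mulry gtr0_sg // mul1e poweRyr ?invr_neq0 ?gt_eqF//.
  rewrite gt0_mulye ?leye_eq//.
  elim/big_ind: _ => //.
  - by move=> x y; exact: mule_gt0.
  - by move=> j _; apply: poweR_gt0'; apply: mule_gt0 => //; rewrite lte_fin.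
pose fr i := fine (F i).
have FE i : F i = (fr i)%:E by rewrite fineK// ge0_fin_numE// ltW.
have fr0 i : 0 < fr i by rewrite -lte_fin -FE.
have hsum : \sum_i (alpha i)^-1 * ln (fr i) <= 0.
  move: Hm; under eq_bigr do rewrite FE -EFinM poweR_EFin.
  rewrite prodEFin lee_fin.
  under eq_bigr do rewrite powRM ?(ltW (z0 _)) ?(ltW (fr0 _))//.
  rewrite big_split /= ger_pMr; last by apply: prodr_gt0 => j _; exact: powR_gt0.
  rewrite -expR_le1 expR_sum.
  move=> H; under eq_bigr do rewrite mulrC expRM lnK ?posrE//.
  exact: H.
have G i := @gibbs _ _ R (mu i) (nu i) (f i) (alpha i) (halpha i) (fi i) (mf i) (Ffin i).
pose I i := fine (\int[nu i]_y (f i y)%:E)%E.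
have IE i : (\int[nu i]_y (f i y)%:E)%E = (I i)%:E.
  rewrite fineK// -integral_fin_num_abs//; by case/integrableP: (fi i).
apply: (@le_trans _ _ (\sum_(i < N) (I i - (alpha i)^-1 * ln (fr i))%:E)%E).
  under eq_bigr do rewrite IE.
  rewrite !sumEFin lee_fin sumrB; lra.
apply: lee_sum => i _.
apply: le_trans (lee_wpmul2l _ (G i)); last by rewrite lee_fin invr_ge0 ltW.
rewrite -EFinM lee_fin mulrBr mulrA mulVf ?gt_eqF// mul1r. exact: le_refl.
Qed.
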